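(* For every integer $n \geq 1$, $$B_n = -\sum_{k=1}^{n} \frac{n}{k}\, S(n-1,k-1)\, B_k^*.$$
   Context: For $n \geq 0$, $X^{\underline{n}} := X(X-1)\cdots(X-n+1)$ ($X^{\underline{0}}=1$). The Stirling numbers of the second kind $S(n,k)$ are defined by $X^n = \sum_{k=0}^{n} S(n,k) X^{\underline{k}}$ for all $n\ge 0$, with $S(n,k)=0$ when $n<k$. The Bernoulli numbers $B_n$ are defined by $\frac{t}{e^t-1} = \sum_{n\ge 0} B_n \frac{t^n}{n!}$. The Bernoulli numbers of the second kind $B_n^*$ are defined by $\frac{t}{\log(1+t)} = \sum_{n \ge 0} B_n^* \frac{t^n}{n!}$ (equivalently $B_n^* = \int_0^1 x^{\underline{n}}\,dx$). *)

(* Defs.v *)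
From mathcomp Require Import all_boot all_order all_algebra.
Set Implicit Arguments. Unset Strict Implicit. Unset Printing Implicit Defensive.
Import Order.TTheory GRing.Theory Num.Theory.
Local Open Scope ring_scope.

Definition ffact_poly (n : nat) : {poly rat} :=
  \prod_(i < n) ('X - (i%:R)%:P).

(* Definite integral over [0,1] of a polynomial: sum_i p_i / (i+1). *)
Definition int01 (p : {poly rat}) : rat :=
  \sum_(i < size p) p`_i / (i.+1)%:R.

(* Bernoulli numbers of the second kind: B*_n = int_0^1 x^(falling n) dx. *)
Definition bernoulli2 (n : nat) : rat := int01 (ffact_poly n).

Definition is_stirling2 (S : nat -> nat -> rat) : Prop :=
  (forall n : nat, 'X^n = \sum_(k < n.+1) S n k *: ffact_poly k) /\
  (forall n k : nat, (n < k)%N -> S n k = 0).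

(* B is the Bernoulli sequence, defined by t/(e^t-1) = sum_n B_n t^n/n! as
   formal power series, i.e. (sum_n B_n t^n/n!) * ((e^t-1)/t) = 1 where
   (e^t-1)/t = sum_m t^m/(m+1)!; coefficientwise: *)
Definition is_bernoulli (B : nat -> rat) : Prop :=
  forall n : nat,
    \sum_(k < n.+1) B k / (k`!)%:R * (1 / (((n - k).+1)`!)%:R)
    = (n == 0%N)%:R.

(* Main.v *)
Require Import Defs.
From mathcomp Require Import all_boot all_order all_algebra.
From mathcomp Require Import ring zify.
Import GRing.Theory Num.Theory.

Lemma bin_swap (n k i : nat) :
  ('C(n, k) * 'C(n - k, i) = 'C(n, i) * 'C(n - i, k))%N.
Proof.
case: (leqP (k + i) n) => H; last first.
  case: (leqP k n) => hk; last first.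
    have -> : 'C(n - i, k) = 0%N by apply: bin_small; lia.
    by rewrite bin_small ?muln0.
  have -> : 'C(n - k, i) = 0%N by apply: bin_small; lia.
  case: (leqP i n) => hi; last by rewrite (@bin_small n i) // muln0.
  have -> : 'C(n - i, k) = 0%N by apply: bin_small; lia.
  by rewrite !muln0.
have Hk : (k <= n)%N by lia.
have Hi : (i <= n)%N by lia.
have H1 : (i <= n - k)%N by lia.
have H2 : (k <= n - i)%N by lia.
have e : (n - k - i = n - i - k)%N by lia.
apply/eqP; rewrite -(@eqn_pmul2r (k`! * (i`! * (n - k - i)`!))); last first.
  by rewrite !muln_gt0 !fact_gt0.
have E1 : ('C(n, k) * 'C(n - k, i) * (k`! * (i`! * (n - k - i)`!)) = n`!)%N.
  by rewrite -(bin_fact Hk) -(bin_fact H1); ring.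
have E2 : ('C(n, i) * 'C(n - i, k) * (k`! * (i`! * (n - k - i)`!)) = n`!)%N.
  by rewrite -(bin_fact Hi) e -(bin_fact H2); ring.
by rewrite E1 E2.
Qed.

Local Open Scope ring_scope.

Lemma int01_ext (p : {poly rat}) (N : nat) : (size p <= N)%N ->
  int01 p = \sum_(i < N) p`_i / (i.+1)%:R.
Proof.
move=> hN; rewrite /int01 (big_ord_widen _ (fun i => p`_i / (i.+1)%:R) hN).
rewrite big_mkcond /=; apply: eq_bigr => i _.
by case: ifP => // /negbT; rewrite -leqNgt => h; rewrite nth_default // mul0r.
Qed.

Lemma int01D p q : int01 (p + q) = int01 p + int01 q.
Proof.
set N := maxn (size p) (size q).
rewrite (@int01_ext p N) ?leq_maxl // (@int01_ext q N) ?leq_maxr //.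
rewrite (@int01_ext _ N) ?size_polyD //.
by rewrite -big_split /=; apply: eq_bigr => i _; rewrite coefD mulrDl.
Qed.

Lemma int01Z c p : int01 (c *: p) = c * int01 p.
Proof.
rewrite (@int01_ext _ (size p)) ?size_scale_leq // /int01 mulr_sumr.
by apply: eq_bigr => i _; rewrite coefZ mulrA.
Qed.

Lemma int010 : int01 0 = 0.
Proof. by rewrite /int01 size_poly0 big_ord0. Qed.

Lemma int01_sum m (c : nat -> rat) (P : nat -> {poly rat}) :
  int01 (\sum_(i < m) c i *: P i) = \sum_(i < m) c i * int01 (P i).
Proof.
elim: m => [|m IH]; first by rewrite !big_ord0 int010.
by rewrite !big_ord_recr /= int01D int01Z IH.
Qed.

Lemma int01Xn k : int01 'X^k = 1 / (k.+1)%:R.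
Proof.
rewrite /int01 size_polyXn big_ord_recr /= big1 ?add0r; last first.
  by move=> i _; rewrite coefXn (ltn_eqF (ltn_ord i)) mul0r.
by rewrite coefXn eqxx.
Qed.

Lemma ffactE j x : (ffact_poly j).[x] = \prod_(i < j) (x - i%:R).
Proof.
rewrite /ffact_poly horner_prod; apply: eq_bigr => i _.
by rewrite hornerD hornerN hornerX hornerC.
Qed.

Lemma ffact_delta j x :
  (ffact_poly j.+1).[x + 1] - (ffact_poly j.+1).[x] = (j.+1)%:R * (ffact_poly j).[x].
Proof.
rewrite !ffactE big_ord_recl big_ord_recr /=.
have -> : \prod_(i < j) (x + 1 - (bump 0 i)%:R) = \prod_(i < j) (x - i%:R).
  by apply: eq_bigr => i _; rewrite /bump /= add1n -addn1 natrD; ring.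
rewrite subr0; set P := \prod_(i < j) _; ring.
Qed.

Lemma bern_bin (B : nat -> rat) : is_bernoulli B -> forall m,
  \sum_(k < m.+1) 'C(m.+1, k)%:R * B k = (m == 0%N)%:R.
Proof.
move=> hB m; have := hB m.
move/(congr1 (fun x => x * (m.+1)`!%:R)).
have -> : (m == 0%N)%:R * (m.+1)`!%:R = (m == 0%N)%:R :> rat.
  by case: eqP => [->|]; rewrite ?mul0r ?mul1r.
rewrite mulr_suml => <-.
apply: eq_bigr => [[k hk]] _ /=.
have hk' : (k <= m.+1)%N by lia.
have e : ((m - k).+1 = m.+1 - k)%N by lia.
rewrite e -(bin_fact hk') !natrM.
have h1 : (k`!%:R : rat) != 0 by rewrite pnatr_eq0 -lt0n fact_gt0.
have h2 : ((m.+1 - k)`!%:R : rat) != 0 by rewrite pnatr_eq0 -lt0n fact_gt0.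
by field; rewrite h1 h2.
Qed.

Definition Gpoly (B : nat -> rat) (p : nat) : {poly rat} :=
  \sum_(k < p.+1) ('C(p.+1, k)%:R * B k / (p.+1)%:R) *: 'X^(p.+1 - k).

Lemma G_inner (B : nat -> rat) (p : nat) (x : rat) (i : 'I_p.+1) :
  \sum_(k < p.+1) ('C(p.+1, k)%:R * B k / (p.+1)%:R) *
     (if (i < p.+1 - k)%N then x ^+ i *+ 'C(p.+1 - k, i) else 0)
  = 'C(p.+1, i)%:R * x ^+ i / (p.+1)%:R *
     \sum_(k < p.+1 - i) 'C(p.+1 - i, k)%:R * B k.
Proof.
set n := p.+1.
rewrite (big_ord_widen n (fun k => 'C(n - i, k)%:R * B k) (leq_subr i n)).
rewrite [in RHS]big_mkcond [in RHS]mulr_sumr; apply: eq_bigr => k _ /=.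
have -> : (i < n - k)%N = (k < n - i)%N.
  have := ltn_ord i; have := ltn_ord k; rewrite -/n => hi hk.
  by apply/idP/idP; lia.
case: ifP => _; last by rewrite !mulr0.
have H := congr1 (fun z : nat => z%:R : rat) (bin_swap n k i).
rewrite /= !natrM in H.
rewrite -mulr_natr.
transitivity (('C(n, k)%:R * 'C(n - k, i)%:R) * (B k * x ^+ i / n%:R)); first by ring.
by rewrite H; ring.
Qed.

Lemma G_delta (B : nat -> rat) : is_bernoulli B -> forall (p : nat) (x : rat),
  (Gpoly B p).[x + 1] - (Gpoly B p).[x] = x ^+ p.
Proof.
move=> hB p x; set n := p.+1.
rewrite /Gpoly !horner_sum -sumrB.
under eq_bigr => k _ do rewrite !hornerZ !hornerXn -mulrBr exprD1n big_ord_recr /= binn mulr1n addrK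
   (big_ord_widen n (fun i => x ^+ i *+ 'C(n - k, i)) (leq_subr k n)) big_mkcond mulr_sumr.
rewrite exchange_big /=.
under eq_bigr => i _ do rewrite G_inner.
rewrite big_ord_recr /= big1; last first.
  move=> i _; have hi := ltn_ord i.
  have -> : (n - widen_ord (leqnSn p) i = (p - i).+1)%N by rewrite /=; lia.
  by rewrite bern_bin // subn_eq0 leqNgt hi mulr0.
have -> : (n - (@ord_max p) = 0.+1)%N by rewrite /= /n subSnn.
rewrite bern_bin // /= binSn add0r mulr1.
have : ((p.+1)%:R : rat) != 0 by rewrite pnatr_eq0.
by move=> h; field; rewrite addrC natr1 pnatr_eq0.
Qed.

Lemma nz1 (n : nat) : 1 + n%:R != 0 :> rat.
Proof. by rewrite addrC natr1 pnatr_eq0. Qed.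

Lemma nz2 (n : nat) : 2%:R + n%:R != 0 :> rat.
Proof. by rewrite -natrD pnatr_eq0. Qed.

Definition Fpoly (S : nat -> nat -> rat) (p : nat) : {poly rat} :=
  \sum_(j < p.+1) (S p j / (j.+1)%:R) *: ffact_poly j.+1.

Lemma F_delta S : is_stirling2 S -> forall p (x : rat),
  (Fpoly S p).[x + 1] - (Fpoly S p).[x] = x ^+ p.
Proof.
move=> [hS _] p x.
rewrite /Fpoly !horner_sum -sumrB -hornerXn hS horner_sum.
apply: eq_bigr => j _; rewrite !hornerZ -mulrBr ffact_delta.
by field; rewrite nz1.
Qed.

Lemma F0 S p : (Fpoly S p).[0] = 0.
Proof.
rewrite /Fpoly horner_sum big1 // => j _.
by rewrite hornerZ ffactE big_ord_recl /= subrr mul0r mulr0.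
Qed.

Lemma G0 B p : (Gpoly B p).[0] = 0.
Proof.
rewrite /Gpoly horner_sum big1 // => k _.
rewrite hornerZ hornerXn expr0n.
have -> : (p.+1 - k == 0)%N = false by have := ltn_ord k; lia.
by rewrite mulr0.
Qed.

Lemma FG S B : is_stirling2 S -> is_bernoulli B -> forall p,
  Fpoly S p = Gpoly B p.
Proof.
move=> hS hB p; set D := Fpoly S p - Gpoly B p.
have hD : forall m : nat, D.[m%:R] = 0.
  elim=> [|m IH]; first by rewrite /D hornerD hornerN F0 G0 subrr.
  rewrite -natr1.
  have e1 := @F_delta S hS p m%:R; have e2 := @G_delta B hB p m%:R.
  move: IH; rewrite /D !hornerD !hornerN => IH.
  have -> : (Fpoly S p).[m%:R + 1] = (Fpoly S p).[m%:R] + m%:R ^+ p by rewrite -e1; ring.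
  have -> : (Gpoly B p).[m%:R + 1] = (Gpoly B p).[m%:R] + m%:R ^+ p by rewrite -e2; ring.
  by rewrite -IH; ring.
apply/eqP; rewrite -subr_eq0 -/D; apply/negPn/negP => nz.
set rs := [seq (i%:R : rat) | i <- iota 0 (size D)].
have hall : all (root D) rs.
  by apply/allP => y /mapP [i _ ->]; rewrite /root hD.
have hu : uniq rs.
  rewrite map_inj_uniq ?iota_uniq // => a b /eqP.
  by rewrite eqr_nat => /eqP.
have := max_poly_roots nz hall hu.
by rewrite size_map size_iota ltnn.
Qed.

Theorem corollary1 (S : nat -> nat -> rat) (B : nat -> rat) :
  is_stirling2 S -> is_bernoulli B ->
  forall n : nat, (1 <= n)%N ->
    B n = - \sum_(1 <= k < n.+1) (n%:R / k%:R) * S n.-1 k.-1 * bernoulli2 k.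
Proof.
move=> hS hB [//|p] _.
rewrite big_add1 /= big_mkord.
have -> : \sum_(i < p.+1) ((p.+1)%:R / (i.+1)%:R) * S p i * bernoulli2 i.+1
    = (p.+1)%:R * int01 (Fpoly S p).
  rewrite /Fpoly (int01_sum p.+1 (fun j => S p j / j.+1%:R) (fun j => ffact_poly j.+1)) mulr_sumr; apply: eq_bigr => i _.
  by rewrite /bernoulli2; ring.
rewrite (@FG S B hS hB) /Gpoly (int01_sum p.+1 (fun k => 'C(p.+1, k)%:R * B k / (p.+1)%:R) (fun k => 'X^(p.+1 - k))) mulr_sumr.
under eq_bigr => k _ do rewrite int01Xn.
have hsum : \sum_(k < p.+1) (p.+1)%:R * ('C(p.+1, k)%:R * B k / (p.+1)%:R *
      (1 / (p.+1 - k).+1%:R))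
    = \sum_(k < p.+1) 'C(p.+2, k)%:R * B k / (p.+2)%:R.
  apply: eq_bigr => k _.
  have hk := ltn_ord k.
  have H := mul_bin_down p.+2 k.
  have e : (p.+2 - k = (p.+1 - k).+1)%N by lia.
  rewrite e /= in H.
  have H2 := congr1 (fun z : nat => z%:R : rat) H.
  rewrite /= !natrM in H2.
  have hm : (((p.+1 - k).+1)%:R : rat) != 0 by rewrite pnatr_eq0.
  have h1 : ((p.+1)%:R : rat) != 0 by rewrite pnatr_eq0.
  have h2 : ((p.+2)%:R : rat) != 0 by rewrite pnatr_eq0.
  have H3 : 'C(p.+2, k)%:R = (p.+2)%:R * 'C(p.+1, k)%:R / ((p.+1 - k).+1)%:R :> rat.
    by rewrite H2 mulrAC divff // mul1r.
  by rewrite H3; field; rewrite ?nz1 ?nz2.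
rewrite hsum.
have hb := @bern_bin B hB p.+1.
rewrite big_ord_recr /= binSn in hb.
rewrite -mulr_suml.
have -> : \sum_(k < p.+1) 'C(p.+2, k)%:R * B k = - ((p.+2)%:R * B p.+1).
  by apply/eqP; rewrite -addr_eq0; apply/eqP.
have h2 : ((p.+2)%:R : rat) != 0 by rewrite pnatr_eq0.
by field; rewrite ?nz1 ?nz2.
Qed.
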